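(* Consider the partial differential equation $$u_t = f(u) + \frac{1}{x}\bigl(x\, g(u)\, u_x\bigr)_x$$ for $u=u(x,t)$, where $f$ is a smooth function that is not identically zero, and $g(u)=k_1 e^{k_2 u}$ with real constants $k_1\neq 0$, $k_2\neq 0$. Then the equation admits a Lie point symmetry other than (constant multiples of) $X=\frac{\partial}{\partial t}$ if and only if $f$ is of one of the following three types, in which case the equation admits the listed symmetries: (a) If $f(u)=k_3 e^{k_4 u}$ with $k_3\neq 0$, $k_4\neq 0$, then the equation has the symmetries $$X_1=\frac{\partial}{\partial t},\qquad X_2=(k_4-k_2)x\frac{\partial}{\partial x}+2k_4 t\frac{\partial}{\partial t}-2\frac{\partial}{\partial u}.$$ (b) If $f(u)=k_3 e^{k_2 u}+k_5$ with $k_3\neq 0$, $k_5\neq 0$, then the equation has the symmetries $$X_1=\frac{\partial}{\partial t},\qquad X_2=e^{-k_2k_5 t}\frac{\partial}{\partial t}+k_5 e^{-k_2k_5 t}\frac{\partial}{\partial u}.$$ (c) If $f(u)=k_5$ with $k_5\neq 0$, then the equation has the symmetries $$X_1=\frac{\partial}{\partial t},\qquad X_2=e^{-k_2k_5 t}\frac{\partial}{\partial t}+k_5 e^{-k_2k_5 t}\frac{\partial}{\partial u},\qquad X_3=k_2 x\frac{\partial}{\partial x}+2\frac{\partial}{\partial u}.$$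
   Context: A Lie point symmetry of the equation is a vector field $X=\xi(t,x,u)\frac{\partial}{\partial x}+\tau(t,x,u)\frac{\partial}{\partial t}+\eta(t,x,u)\frac{\partial}{\partial u}$ whose second prolongation annihilates $u_t-f(u)-\frac{1}{x}(x g(u)u_x)_x$ on the solution set of the equation (the standard infinitesimal invariance criterion). The equation is a generalized Fisher equation written in cylindrical coordinates, with $x$ the radial variable. For arbitrary $f,g$ the field $\frac{\partial}{\partial t}$ is always a symmetry. *)

(* Defs.v *)
From Stdlib Require Import Reals List.
From Coquelicot Require Import Coquelicot.
Open Scope R_scope.

Definition smooth1 (f : R -> R) : Prop :=
  forall (n : nat) (x : R), ex_derive (Derive_n f n) x.

Definition dX (h : R -> R -> R) : R -> R -> R :=
  fun x t => Derive (fun y => h y t) x.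
Definition dT (h : R -> R -> R) : R -> R -> R :=
  fun x t => Derive (fun s => h x s) t.

Inductive dir2 := D2x | D2t.
Fixpoint iterD2 (ds : list dir2) (h : R -> R -> R) : R -> R -> R :=
  match ds with
  | nil => h
  | D2x :: ds' => dX (iterD2 ds' h)
  | D2t :: ds' => dT (iterD2 ds' h)
  end.

Definition smooth2 (h : R -> R -> R) : Prop :=
  forall (ds : list dir2) (x t : R),
    let H := iterD2 ds h in
    ex_derive (fun y => H y t) x /\ ex_derive (fun s => H x s) t /\
    continuous (fun p : R * R => H (fst p) (snd p)) (x, t).

Definition p3x (F : R -> R -> R -> R) : R -> R -> R -> R :=
  fun x t u => Derive (fun y => F y t u) x.
Definition p3t (F : R -> R -> R -> R) : R -> R -> R -> R :=
  fun x t u => Derive (fun s => F x s u) t.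
Definition p3u (F : R -> R -> R -> R) : R -> R -> R -> R :=
  fun x t u => Derive (fun v => F x t v) u.

Inductive dir3 := D3x | D3t | D3u.
Fixpoint iterD3 (ds : list dir3) (F : R -> R -> R -> R) : R -> R -> R -> R :=
  match ds with
  | nil => F
  | D3x :: ds' => p3x (iterD3 ds' F)
  | D3t :: ds' => p3t (iterD3 ds' F)
  | D3u :: ds' => p3u (iterD3 ds' F)
  end.

Definition smooth3_xpos (F : R -> R -> R -> R) : Prop :=
  forall (ds : list dir3) (x t u : R), 0 < x ->
    let G := iterD3 ds F in
    ex_derive (fun y => G y t u) x /\ ex_derive (fun s => G x s u) t /\
    ex_derive (fun v => G x t v) u /\
    continuous (fun p : R * R * R => G (fst (fst p)) (snd (fst p)) (snd p))
      (x, t, u).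

(* ---------- second-order jet space J^2 with coordinates
   (x, t, u, u_x, u_t, u_xx, u_xt, u_tt) ---------- *)
Definition jetfun := R -> R -> R -> R -> R -> R -> R -> R -> R.

(* Delta = u_t - f(u) - (1/x) D_x( x g(u) u_x ), the total derivative
   D_x (x g(u) u_x) = g(u) u_x + x g'(u) u_x u_x + x g(u) u_xx written out. *)
Definition fisherJ (f g : R -> R) : jetfun :=
  fun x t u ux ut uxx uxt utt =>
    ut - f u - (1 / x) * (g u * ux + x * Derive g u * ux * ux + x * g u * uxx).

Definition gexp (k1 k2 : R) : R -> R := fun u => k1 * exp (k2 * u).

(* Second prolongation pr^(2) X of X = xi d/dx + tau d/dt + eta d/du applied
   to the jet function D, evaluated at the 2-jet of the section u at (x,t).
   The prolonged coefficients are eta^J = D_J Q + xi u_{J,x} + tau u_{J,t}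
   with characteristic Q = eta - xi u_x - tau u_t, total derivatives being
   computed along the section u. *)
Definition pr2_apply (xi tau eta : R -> R -> R -> R) (D : jetfun)
    (u : R -> R -> R) (x t : R) : R :=
  let ux := dX u in
  let ut := dT u in
  let Q := fun x t => eta x t (u x t) - xi x t (u x t) * ux x t
                      - tau x t (u x t) * ut x t in
  let Xi := xi x t (u x t) in
  let Ta := tau x t (u x t) in
  let etaX := dX Q x t + Xi * dX ux x t + Ta * dT ux x t in
  let etaT := dT Q x t + Xi * dX ut x t + Ta * dT ut x t in
  let etaXX := dX (dX Q) x t + Xi * dX (dX ux) x t + Ta * dT (dX ux) x t in
  let etaXT := dT (dX Q) x t + Xi * dX (dT ux) x t + Ta * dT (dT ux) x t in
  let etaTT := dT (dT Q) x t + Xi * dX (dT ut) x t + Ta * dT (dT ut) x t in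
  let j1 := u x t in
  let j2 := ux x t in
  let j3 := ut x t in
  let j4 := dX ux x t in
  let j5 := dT ux x t in
  let j6 := dT ut x t in
  Xi * Derive (fun y => D y t j1 j2 j3 j4 j5 j6) x
  + Ta * Derive (fun s => D x s j1 j2 j3 j4 j5 j6) t
  + eta x t (u x t) * Derive (fun v => D x t v j2 j3 j4 j5 j6) j1
  + etaX * Derive (fun v => D x t j1 v j3 j4 j5 j6) j2
  + etaT * Derive (fun v => D x t j1 j2 v j4 j5 j6) j3
  + etaXX * Derive (fun v => D x t j1 j2 j3 v j5 j6) j4
  + etaXT * Derive (fun v => D x t j1 j2 j3 j4 v j6) j5
  + etaTT * Derive (fun v => D x t j1 j2 j3 j4 j5 v) j6.

Definition evalJ (D : jetfun) (u : R -> R -> R) (x t : R) : R :=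
  D x t (u x t) (dX u x t) (dT u x t) (dX (dX u) x t) (dT (dX u) x t)
    (dT (dT u) x t).

(* X = xi d/dx + tau d/dt + eta d/du (smooth on x > 0) is a Lie point symmetry
   of D = 0: pr^(2) X (D) = 0 at every 2-jet (realised by a smooth section u
   at a point (x,t) with x > 0) at which D = 0. *)
Definition lie_point_symmetry (D : jetfun) (xi tau eta : R -> R -> R -> R)
  : Prop :=
  smooth3_xpos xi /\ smooth3_xpos tau /\ smooth3_xpos eta /\
  forall u : R -> R -> R, smooth2 u ->
    forall x t : R, 0 < x -> evalJ D u x t = 0 ->
      pr2_apply xi tau eta D u x t = 0.

Definition const_multiple_dt (xi tau eta : R -> R -> R -> R) : Prop :=
  exists c : R, forall x t u, 0 < x ->
    xi x t u = 0 /\ tau x t u = c /\ eta x t u = 0.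

(* Main.v *)
Require Import Defs.
From Stdlib Require Import Reals Lra FunctionalExtensionality List Classical.
From Coquelicot Require Import Coquelicot.
Import ListNotations.
Open Scope R_scope.


Lemma cplus {U : UniformSpace} (f g : U -> R) p :
  continuous f p -> continuous g p -> continuous (fun q => f q + g q) p.
Proof. intros. apply (continuous_plus (V:=R_NormedModule) f g); auto. Qed.
Lemma cmult {U : UniformSpace} (f g : U -> R) p :
  continuous f p -> continuous g p -> continuous (fun q => f q * g q) p.
Proof. intros. apply (continuous_mult (K:=R_AbsRing) f g); auto. Qed.
Lemma cfst {U V : UniformSpace} (p : U * V) : continuous fst p.
Proof. destruct p. apply continuous_fst. Qed.
Lemma csnd {U V : UniformSpace} (p : U * V) : continuous snd p.
Proof. destruct p. apply continuous_snd. Qed.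

Definition quad (a b c d e h : R) : R -> R -> R :=
  fun x t => a + b*x + c*t + d*(x*x) + e*(x*t) + h*(t*t).

Lemma dX_quad a b c d e h : dX (quad a b c d e h) = quad b (2*d) e 0 0 0.
Proof.
  unfold dX, quad. apply functional_extensionality; intro x.
  apply functional_extensionality; intro t.
  apply is_derive_unique. auto_derive; auto. ring.
Qed.
Lemma dT_quad a b c d e h : dT (quad a b c d e h) = quad c e (2*h) 0 0 0.
Proof.
  unfold dT, quad. apply functional_extensionality; intro x.
  apply functional_extensionality; intro t.
  apply is_derive_unique. auto_derive; auto. ring.
Qed.
Lemma iter_quad ds : forall a b c d e h, exists a' b' c' d' e' h',
  iterD2 ds (quad a b c d e h) = quad a' b' c' d' e' h'.
Proof.
  induction ds as [|[] ds IH]; intros.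
  - do 6 eexists; reflexivity.
  - destruct (IH a b c d e h) as (a'&b'&c'&d'&e'&h'&E). simpl. rewrite E, dX_quad.
    do 6 eexists; reflexivity.
  - destruct (IH a b c d e h) as (a'&b'&c'&d'&e'&h'&E). simpl. rewrite E, dT_quad.
    do 6 eexists; reflexivity.
Qed.
Lemma smooth2_quad a b c d e h : smooth2 (quad a b c d e h).
Proof.
  intros ds x t. destruct (iter_quad ds a b c d e h) as (a'&b'&c'&d'&e'&h'&E).
  simpl. rewrite E. unfold quad. split; [|split].
  - auto_derive; auto.
  - auto_derive; auto.
  - repeat first [apply cplus | apply cmult | apply continuous_const | apply cfst | apply csnd].
Qed.
Lemma cexp {U : UniformSpace} (f : U -> R) p :
  continuous f p -> continuous (fun q => exp (f q)) p.
Proof. intros. apply (continuous_comp f exp). auto.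
  apply continuity_pt_filterlim. apply derivable_continuous_pt. apply derivable_pt_exp. Qed.
Lemma cff (p : R*R*R) : continuous (fun q : R*R*R => fst (fst q)) p.
Proof. apply (continuous_comp fst fst). apply cfst. apply cfst. Qed.
Lemma csf (p : R*R*R) : continuous (fun q : R*R*R => snd (fst q)) p.
Proof. apply (continuous_comp fst snd). apply cfst. apply csnd. Qed.

Definition cls (a b c d k : R) : R -> R -> R -> R :=
  fun x t u => a*x + b + c*t + d*exp(k*t).
Lemma iter_cls ds : forall a b c d k, exists a' b' c' d',
  iterD3 ds (cls a b c d k) = cls a' b' c' d' k.
Proof.
  induction ds as [|[] ds IH]; intros.
  - do 4 eexists; reflexivity.
  - destruct (IH a b c d k) as (a'&b'&c'&d'&E). simpl. rewrite E.
    exists 0, a', 0, 0. unfold p3x, cls.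
    do 3 (apply functional_extensionality; intro).
    apply is_derive_unique. auto_derive; auto. ring.
  - destruct (IH a b c d k) as (a'&b'&c'&d'&E). simpl. rewrite E.
    exists 0, c', 0, (d'*k). unfold p3t, cls.
    do 3 (apply functional_extensionality; intro).
    apply is_derive_unique. auto_derive; auto. ring.
  - destruct (IH a b c d k) as (a'&b'&c'&d'&E). simpl. rewrite E.
    exists 0, 0, 0, 0. unfold p3u, cls.
    do 3 (apply functional_extensionality; intro).
    apply is_derive_unique. auto_derive; auto. ring.
Qed.
Lemma smooth3_cls a b c d k : smooth3_xpos (cls a b c d k).
Proof.
  intros ds x t u _. destruct (iter_cls ds a b c d k) as (a'&b'&c'&d'&E).
  simpl. rewrite E. unfold cls. split; [|split; [|split]].
  1-3: auto_derive; auto.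
  repeat first [apply cplus | apply cmult | apply continuous_const | apply cexp | apply cff | apply csf].
Qed.
Lemma smooth3_ext F G : (forall x t u, F x t u = G x t u) -> smooth3_xpos G -> smooth3_xpos F.
Proof.
  intros H. replace F with G; auto.
  do 3 (apply functional_extensionality; intro). auto.
Qed.
Definition FJe (f : R -> R) (k1 k2 : R) : jetfun :=
  fun x t u ux ut uxx uxt utt =>
    ut - f u - (1/x)*(k1*exp(k2*u)*ux + x*(k1*k2*exp(k2*u))*ux*ux + x*(k1*exp(k2*u))*uxx).

Lemma Derive_gexp k1 k2 u : Derive (gexp k1 k2) u = k1*k2*exp(k2*u).
Proof. apply is_derive_unique. unfold gexp. auto_derive; auto. ring. Qed.

Lemma FJ_eq f k1 k2 : fisherJ f (gexp k1 k2) = FJe f k1 k2.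
Proof.
  unfold fisherJ, FJe.
  repeat (apply functional_extensionality; intro).
  rewrite Derive_gexp. unfold gexp. reflexivity.
Qed.

Section FJD.
Variables (f : R -> R) (k1 k2 x t u ux ut uxx uxt utt : R).
Lemma FJ_dx : 0 < x -> Derive (fun y => FJe f k1 k2 y t u ux ut uxx uxt utt) x
   = k1*exp(k2*u)*ux/(x*x).
Proof. intros. apply is_derive_unique. unfold FJe. auto_derive. lra. field. lra. Qed.
Lemma FJ_dt : Derive (fun s => FJe f k1 k2 x s u ux ut uxx uxt utt) t = 0.
Proof. unfold FJe. apply Derive_const. Qed.
Lemma FJ_du : ex_derive f u -> Derive (fun v => FJe f k1 k2 x t v ux ut uxx uxt utt) u
   = - Derive f u - (1/x)*(k1*k2*exp(k2*u)*ux + x*(k1*k2*k2*exp(k2*u))*ux*ux + x*(k1*k2*exp(k2*u))*uxx).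
Proof. intros. apply is_derive_unique. unfold FJe. auto_derive. auto.
  change (fun x0 => f x0) with f. ring. Qed.
Lemma FJ_dux : Derive (fun v => FJe f k1 k2 x t u v ut uxx uxt utt) ux
   = -((1/x)*(k1*exp(k2*u) + x*(k1*k2*exp(k2*u))*(2*ux))).
Proof. apply is_derive_unique. unfold FJe. auto_derive; auto; ring. Qed.
Lemma FJ_dut : Derive (fun v => FJe f k1 k2 x t u ux v uxx uxt utt) ut = 1.
Proof. apply is_derive_unique. unfold FJe. auto_derive; auto; ring. Qed.
Lemma FJ_duxx : Derive (fun v => FJe f k1 k2 x t u ux ut v uxt utt) uxx
   = -((1/x)*(x*(k1*exp(k2*u)))).
Proof. apply is_derive_unique. unfold FJe. auto_derive; auto; ring. Qed.
Lemma FJ_duxt : Derive (fun v => FJe f k1 k2 x t u ux ut uxx v utt) uxt = 0.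
Proof. unfold FJe. apply Derive_const. Qed.
Lemma FJ_dutt : Derive (fun v => FJe f k1 k2 x t u ux ut uxx uxt v) utt = 0.
Proof. unfold FJe. apply Derive_const. Qed.
End FJD.

Lemma s2_dx u ds x t : smooth2 u ->
  is_derive (fun y => iterD2 ds u y t) x (iterD2 (D2x :: ds) u x t).
Proof. intros H. destruct (H ds x t) as [H1 _]. simpl. unfold dX. apply Derive_correct. auto. Qed.
Lemma s2_dt u ds x t : smooth2 u ->
  is_derive (fun s => iterD2 ds u x s) t (iterD2 (D2t :: ds) u x t).
Proof. intros H. destruct (H ds x t) as [_ [H1 _]]. simpl. unfold dT. apply Derive_correct. auto. Qed.

Lemma iterD2_dX ds u : iterD2 ds (dX u) = iterD2 (ds ++ [D2x]) u.
Proof. induction ds as [|[] ds IH]; simpl; try rewrite IH; auto. Qed.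
Lemma smooth2_dX u : smooth2 u -> smooth2 (dX u).
Proof. intros H ds x t. rewrite iterD2_dX. apply H. Qed.

Lemma schwarz2 u x t : smooth2 u -> dX (dT u) x t = dT (dX u) x t.
Proof.
  intros H. unfold dX, dT.
  apply Schwarz.
  - exists (mkposreal 1 Rlt_0_1). intros a b _ _.
    destruct (H [] a b) as [h1 [h2 _]].
    destruct (H [D2t] a b) as [h3 _].
    destruct (H [D2x] a b) as [_ [h4 _]]. simpl in *. auto.
  - apply continuity_2d_pt_filterlim. apply (H [D2x; D2t] x t).
  - apply continuity_2d_pt_filterlim. apply (H [D2t; D2x] x t).
Qed.

Lemma sym_lin (f : R -> R) (k1 k2 a : R) (T N T' N' : R -> R) :
  smooth1 f ->
  smooth3_xpos (fun x t u => a * x) ->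
  smooth3_xpos (fun x t u => T t) -> smooth3_xpos (fun x t u => N t) ->
  (forall t, is_derive T t (T' t)) -> (forall t, is_derive N t (N' t)) ->
  (forall t, k2 * N t = 2 * a - T' t) ->
  (forall t u, N' t = N t * Derive f u + T' t * f u) ->
  lie_point_symmetry (fisherJ f (gexp k1 k2))
    (fun x t u => a * x) (fun x t u => T t) (fun x t u => N t).
Proof.
  intros Hf Sxi Stau Seta HT HN Hrel Hode.
  split; [auto|split; [auto|split; [auto|]]].
  intros u Hu x t Hx Hev.
  rewrite FJ_eq in *. unfold evalJ in Hev. unfold pr2_apply. cbv zeta beta.
  assert (Hfd : ex_derive f (u x t)).
  { destruct (Hf 0%nat (u x t)) as [l Hl]. exists l. exact Hl. }
  rewrite FJ_dx, FJ_dt, FJ_du, FJ_dux, FJ_dut, FJ_duxx, FJ_duxt, FJ_dutt by auto.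
  set (Q := fun x0 t0 => N t0 - a * x0 * dX u x0 t0 - T t0 * dT u x0 t0).
  assert (HQx : forall y, is_derive (fun z => Q z t) y
     (- (a * dX u y t + a * y * dX (dX u) y t) - T t * dX (dT u) y t)).
  { intro y. unfold Q.
    pose proof (s2_dx u [D2x] y t Hu) as h1. pose proof (s2_dx u [D2t] y t Hu) as h2.
    simpl in h1, h2. auto_derive.
    split; [eexists; exact h1|split; [eexists; exact h2|auto]].
    unfold dX, dT; ring. }
  assert (HQt : is_derive (fun s => Q x s) t
     (N' t - a * x * dT (dX u) x t - (T' t * dT u x t + T t * dT (dT u) x t))).
  { unfold Q.
    pose proof (s2_dt u [D2x] x t Hu) as h1. pose proof (s2_dt u [D2t] x t Hu) as h2.
    simpl in h1, h2. auto_derive.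
    split; [eexists; apply HN|split; [eexists; exact h1|split; [eexists; apply HT|split; [eexists; exact h2|auto]]]].
    change (fun x0 : R => N x0) with N. change (fun x0 : R => T x0) with T.
    rewrite (is_derive_unique _ _ _ (HN t)), (is_derive_unique _ _ _ (HT t)).
    unfold dX, dT; ring. }
  assert (HQxx : is_derive (fun y => dX Q y t) x
     (- (a * dX (dX u) x t + (a * dX (dX u) x t + a * x * dX (dX (dX u)) x t))
      - T t * dX (dX (dT u)) x t)).
  { apply is_derive_ext with (f := fun y => - (a * dX u y t + a * y * dX (dX u) y t) - T t * dX (dT u) y t).
    { intro y. symmetry. apply is_derive_unique. apply HQx. }
    pose proof (s2_dx u [D2x] x t Hu) as h1. pose proof (s2_dx u [D2x; D2x] x t Hu) as h2.
    pose proof (s2_dx u [D2x; D2t] x t Hu) as h3.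
    simpl in h1, h2, h3. auto_derive.
    split; [eexists; exact h1|split; [eexists; exact h2|split; [eexists; exact h3|auto]]].
    unfold dX, dT; ring. }
  assert (E1 : dX Q x t = - (a * dX u x t + a * x * dX (dX u) x t) - T t * dX (dT u) x t)
    by (apply is_derive_unique; apply HQx).
  assert (E2 : dT Q x t = N' t - a * x * dT (dX u) x t - (T' t * dT u x t + T t * dT (dT u) x t))
    by (apply is_derive_unique; apply HQt).
  assert (E3 : dX (dX Q) x t = - (a * dX (dX u) x t + (a * dX (dX u) x t + a * x * dX (dX (dX u)) x t))
      - T t * dX (dX (dT u)) x t) by (apply is_derive_unique; apply HQxx).
  rewrite E1, E2, E3.
  assert (S1 : dX (dT u) x t = dT (dX u) x t) by (apply schwarz2; auto).
  assert (S2 : dX (dX (dT u)) x t = dT (dX (dX u)) x t).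
  { rewrite <- (schwarz2 (dX u)) by (apply smooth2_dX; auto).
    unfold dX at 1 3. apply Derive_ext. intro y. apply schwarz2; auto. }
  rewrite S1, S2.
  assert (HB : dT u x t = f (u x t) + (1/x)*(k1*exp(k2*u x t)*dX u x t
      + x*(k1*k2*exp(k2*u x t))*dX u x t*dX u x t + x*(k1*exp(k2*u x t))*dX (dX u) x t)).
  { unfold FJe in Hev. lra. }
  rewrite HB, (Hode t (u x t)).
  assert (HT' : T' t = 2 * a - k2 * N t) by (rewrite Hrel; ring).
  rewrite HT'. field. lra.
Qed.
Lemma chain2 (H H2 : R -> R -> R) (w : R -> R) (y0 H1 w' r : R) :
  0 < r ->
  (forall a b, Rabs (a - y0) < r -> is_derive (fun v => H a v) b (H2 a b)) ->
  (forall eps, 0 < eps -> exists d, 0 < d /\ forall a b, Rabs (a - y0) < d ->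
       Rabs (b - w y0) < d -> Rabs (H2 a b - H2 y0 (w y0)) < eps) ->
  is_derive (fun a => H a (w y0)) y0 H1 ->
  is_derive w y0 w' ->
  is_derive (fun a => H a (w a)) y0 (H1 + H2 y0 (w y0) * w').
Proof.
  intros Hr HH2 Hc HH1 Hw.
  set (b0 := w y0). set (L := H2 y0 b0).
  assert (Hcw : continuity_pt w y0).
  { assert (Hex : ex_derive w y0) by (exists w'; auto).
    apply (ex_derive_continuous (V:=R_NormedModule)) in Hex.
    apply continuity_pt_filterlim. exact Hex. }
  apply is_derive_Reals in HH1. apply is_derive_Reals in Hw.
  apply is_derive_Reals. intros eps He.
  assert (He3 : 0 < eps / 3) by lra.
  destruct (HH1 _ He3) as [d1 Hd1].
  set (e2 := Rmin 1 (eps / 3 / (Rabs L + 1))).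
  assert (He2 : 0 < e2).
  { unfold e2. apply Rmin_glb_lt. lra. apply Rdiv_lt_0_compat. lra.
    pose proof (Rabs_pos L); lra. }
  destruct (Hw _ He2) as [d2 Hd2].
  set (e4 := eps / 3 / (Rabs w' + 1)).
  assert (He4 : 0 < e4).
  { unfold e4. apply Rdiv_lt_0_compat. lra. pose proof (Rabs_pos w'); lra. }
  destruct (Hc _ He4) as [d [Hd Hd4]].
  destruct (Hcw d Hd) as [d3 [Hd3 Hd3']].
  assert (Hpos : 0 < Rmin (Rmin d1 d2) (Rmin (Rmin d3 d) r)).
  { repeat apply Rmin_glb_lt; try apply cond_pos; lra. }
  exists (mkposreal _ Hpos). simpl. intros h Hh0 Hh.
  assert (Hh1 : Rabs h < d1) by (eapply Rlt_le_trans; [apply Hh|];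
     eapply Rle_trans; [apply Rmin_l|]; apply Rmin_l).
  assert (Hh2 : Rabs h < d2) by (eapply Rlt_le_trans; [apply Hh|];
     eapply Rle_trans; [apply Rmin_l|]; apply Rmin_r).
  assert (Hh3 : Rabs h < d3) by (eapply Rlt_le_trans; [apply Hh|];
     eapply Rle_trans; [apply Rmin_r|]; eapply Rle_trans; [apply Rmin_l|]; apply Rmin_l).
  assert (Hh4 : Rabs h < d) by (eapply Rlt_le_trans; [apply Hh|];
     eapply Rle_trans; [apply Rmin_r|]; eapply Rle_trans; [apply Rmin_l|]; apply Rmin_r).
  assert (Hh5 : Rabs h < r) by (eapply Rlt_le_trans; [apply Hh|];
     eapply Rle_trans; [apply Rmin_r|]; apply Rmin_r).
  assert (Hyh : Rabs (y0 + h - y0) = Rabs h) by (f_equal; ring).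
  destruct (MVT_cor4 (fun v => H (y0 + h) v) (H2 (y0 + h)) b0 (Rabs (w (y0 + h) - b0)))
    with (b := w (y0 + h)) as [c [Hc1 Hc2]].
  { intros c _. apply HH2. rewrite Hyh. auto. }
  { lra. }
  assert (Hwd : Rabs (w (y0 + h) - b0) < d).
  { destruct (Req_dec h 0) as [->|hn]; [lra|].
    apply (Hd3' (y0 + h)). split.
    - unfold D_x, no_cond. split; auto. lra.
    - simpl. unfold R_dist. rewrite Hyh. auto. }
  assert (HL : Rabs (H2 (y0 + h) c - L) < e4).
  { apply Hd4. rewrite Hyh; auto. fold b0. lra. }
  specialize (Hd1 h Hh0 Hh1). specialize (Hd2 h Hh0 Hh2).
  set (q := (w (y0 + h) - w y0) / h) in *.
  assert (Hq : Rabs (q - w') < e2) by auto.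
  assert (Hq1 : Rabs q <= Rabs w' + 1).
  { assert (e2 <= 1) by apply Rmin_l.
    replace q with (w' + (q - w')) by ring.
    pose proof (Rabs_triang w' (q - w')). lra. }
  assert (Heq : (H (y0 + h) (w (y0 + h)) - H y0 (w y0)) / h - (H1 + L * w') =
     ((H (y0 + h) b0 - H y0 b0) / h - H1) + ((H2 (y0 + h) c - L) * q + L * (q - w'))).
  { unfold q. fold b0. replace (H (y0 + h) (w (y0 + h))) with
      (H (y0 + h) b0 + H2 (y0 + h) c * (w (y0 + h) - b0)) by lra.
    field. auto. }
  fold b0 in Hd1. fold L. rewrite Heq.
  eapply Rle_lt_trans. apply Rabs_triang.
  apply Rlt_le_trans with (eps / 3 + (eps / 3 + eps / 3)); [|lra].
  apply Rplus_lt_le_compat. lra.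
  eapply Rle_trans. apply Rabs_triang.
  apply Rplus_le_compat.
  - rewrite Rabs_mult.
    apply Rle_trans with (e4 * (Rabs w' + 1)).
    apply Rmult_le_compat; try apply Rabs_pos; lra.
    unfold e4. right. field. pose proof (Rabs_pos w'); lra.
  - rewrite Rabs_mult.
    apply Rle_trans with (Rabs L * (eps / 3 / (Rabs L + 1))).
    apply Rmult_le_compat_l. apply Rabs_pos.
    assert (e2 <= eps / 3 / (Rabs L + 1)) by apply Rmin_r. lra.
    pose proof (Rabs_pos L).
    apply Rle_trans with ((Rabs L + 1) * (eps / 3 / (Rabs L + 1))).
    apply Rmult_le_compat_r. apply Rlt_le, Rdiv_lt_0_compat; lra. lra.
    right. field. lra.
Qed.
Lemma ballR (x e y : R) : ball x e y <-> Rabs (y - x) < e.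
Proof. reflexivity. Qed.

Lemma cont3_eps (G : R -> R -> R -> R) x t u :
  continuous (fun p : R * R * R => G (fst (fst p)) (snd (fst p)) (snd p)) (x, t, u) ->
  forall eps, 0 < eps -> exists d, 0 < d /\ forall a b c,
    Rabs (a - x) < d -> Rabs (b - t) < d -> Rabs (c - u) < d ->
    Rabs (G a b c - G x t u) < eps.
Proof.
  intros Hc eps He.
  assert (HP : locally (G x t u) (ball (G x t u) (mkposreal eps He))).
  { exists (mkposreal eps He). auto. }
  destruct (Hc _ HP) as [d Hd].
  exists d. split. apply cond_pos.
  intros a b c Ha Hb Hcc.
  apply (Hd (a, b, c)). split; [split|]; simpl; apply ballR; auto.
Qed.
Lemma chain_x F ds t y w w' : smooth3_xpos F -> 0 < y -> is_derive w y w' ->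
  is_derive (fun z => iterD3 ds F z t (w z)) y
    (iterD3 (D3x :: ds) F y t (w y) + iterD3 (D3u :: ds) F y t (w y) * w').
Proof.
  intros HF Hy Hw.
  apply (chain2 (fun a b => iterD3 ds F a t b) (fun a b => iterD3 (D3u :: ds) F a t b) w y _ w' y Hy).
  - intros a b Ha. assert (0 < a) by (apply Rabs_lt_between' in Ha; lra).
    destruct (HF ds a t b H) as [_ [_ [H3 _]]].
    simpl. unfold p3u. apply Derive_correct. exact H3.
  - intros eps He. destruct (HF (D3u :: ds) y t (w y) Hy) as [_ [_ [_ Hc]]].
    destruct (cont3_eps _ _ _ _ Hc eps He) as [d [Hd Hd']].
    exists d. split; auto. intros a b Ha Hb. apply Hd'; auto.
    rewrite Rminus_diag, Rabs_R0. auto.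
  - destruct (HF ds y t (w y) Hy) as [H1 _]. simpl. unfold p3x. apply Derive_correct. exact H1.
  - exact Hw.
Qed.

Lemma chain_t F ds x t w w' : smooth3_xpos F -> 0 < x -> is_derive w t w' ->
  is_derive (fun s => iterD3 ds F x s (w s)) t
    (iterD3 (D3t :: ds) F x t (w t) + iterD3 (D3u :: ds) F x t (w t) * w').
Proof.
  intros HF Hx Hw.
  apply (chain2 (fun a b => iterD3 ds F x a b) (fun a b => iterD3 (D3u :: ds) F x a b) w t _ w' 1 Rlt_0_1).
  - intros a b Ha.
    destruct (HF ds x a b Hx) as [_ [_ [H3 _]]].
    simpl. unfold p3u. apply Derive_correct. exact H3.
  - intros eps He. destruct (HF (D3u :: ds) x t (w t) Hx) as [_ [_ [_ Hc]]].
    destruct (cont3_eps _ _ _ _ Hc eps He) as [d [Hd Hd']].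
    exists d. split; auto. intros a b Ha Hb. apply Hd'; auto.
    rewrite Rminus_diag, Rabs_R0. auto.
  - destruct (HF ds x t (w t) Hx) as [_ [H2 _]]. simpl. unfold p3t. apply Derive_correct. exact H2.
  - exact Hw.
Qed.


Definition uq (x0 t0 u0 A B C E : R) : R -> R -> R :=
  fun x t => u0 + A*(x-x0) + B*(t-t0) + C/2*((x-x0)*(x-x0)) + E*((x-x0)*(t-t0)).
Definition lin (a b c x0 t0 : R) : R -> R -> R := fun x t => a + b*(x-x0) + c*(t-t0).

Lemma dX_uq x0 t0 u0 A B C E : dX (uq x0 t0 u0 A B C E) = lin A C E x0 t0.
Proof. unfold dX, uq, lin. do 2 (apply functional_extensionality; intro).
  apply is_derive_unique. auto_derive; auto. field. Qed.
Lemma dT_uq x0 t0 u0 A B C E : dT (uq x0 t0 u0 A B C E) = lin B E 0 x0 t0.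
Proof. unfold dT, uq, lin. do 2 (apply functional_extensionality; intro).
  apply is_derive_unique. auto_derive; auto. ring. Qed.
Lemma dX_lin a b c x0 t0 : dX (lin a b c x0 t0) = lin b 0 0 x0 t0.
Proof. unfold dX, lin. do 2 (apply functional_extensionality; intro).
  apply is_derive_unique. auto_derive; auto. ring. Qed.
Lemma dT_lin a b c x0 t0 : dT (lin a b c x0 t0) = lin c 0 0 x0 t0.
Proof. unfold dT, lin. do 2 (apply functional_extensionality; intro).
  apply is_derive_unique. auto_derive; auto. ring. Qed.
Lemma uq_at x0 t0 u0 A B C E : uq x0 t0 u0 A B C E x0 t0 = u0.
Proof. unfold uq. ring. Qed.
Lemma lin_at a b c x0 t0 : lin a b c x0 t0 x0 t0 = a.
Proof. unfold lin. ring. Qed.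
Lemma smooth2_uq x0 t0 u0 A B C E : smooth2 (uq x0 t0 u0 A B C E).
Proof.
  replace (uq x0 t0 u0 A B C E) with
    (quad (u0 - A*x0 - B*t0 + C/2*(x0*x0) + E*(x0*t0)) (A - C*x0 - E*t0) (B - E*x0) (C/2) E 0).
  apply smooth2_quad.
  unfold uq, quad. do 2 (apply functional_extensionality; intro). field.
Qed.

Definition DDx F x t u A := p3x F x t u + p3u F x t u * A.
Definition DDt F x t u B := p3t F x t u + p3u F x t u * B.
Definition DDxx F x t u A C := p3x (p3x F) x t u + p3u (p3x F) x t u * A
  + (p3x (p3u F) x t u + p3u (p3u F) x t u * A) * A + p3u F x t u * C.

Definition EXPR (f : R -> R) k1 k2 xi tau eta x t u A B C E :=
  xi x t u * (k1*exp(k2*u)*A/(x*x))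
  + eta x t u * (- Derive f u - (1/x)*(k1*k2*exp(k2*u)*A + x*(k1*k2*k2*exp(k2*u))*A*A + x*(k1*k2*exp(k2*u))*C))
  + (DDx eta x t u A - DDx xi x t u A * A - DDx tau x t u A * B) * (-((1/x)*(k1*exp(k2*u) + x*(k1*k2*exp(k2*u))*(2*A))))
  + (DDt eta x t u B - DDt xi x t u B * A - DDt tau x t u B * B)
  + (DDxx eta x t u A C - DDxx xi x t u A C * A - 2 * DDx xi x t u A * C - DDxx tau x t u A C * B
     - 2 * DDx tau x t u A * E) * (-((1/x)*(x*(k1*exp(k2*u))))).

Definition Bof (f : R -> R) k1 k2 x u A C :=
  f u + (1/x)*(k1*exp(k2*u)*A + x*(k1*k2*exp(k2*u))*A*A + x*(k1*exp(k2*u))*C).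

Lemma isd_Q (a b c p q : R -> R) x da db dc dp dq :
  is_derive a x da -> is_derive b x db -> is_derive c x dc -> is_derive p x dp -> is_derive q x dq ->
  is_derive (fun s => a s - b s * p s - c s * q s) x (da - (db * p x + b x * dp) - (dc * q x + c x * dq)).
Proof.
  intros Ha Hb Hc Hp Hq. auto_derive.
  repeat split; eexists; eassumption.
  change (fun x => a x) with a. change (fun x => b x) with b. change (fun x => c x) with c.
  change (fun x => p x) with p. change (fun x => q x) with q.
  rewrite (is_derive_unique _ _ _ Ha), (is_derive_unique _ _ _ Hb), (is_derive_unique _ _ _ Hc),
    (is_derive_unique _ _ _ Hp), (is_derive_unique _ _ _ Hq). ring.
Qed.

Lemma isd_VX (a1 a2 b b1 b2 c c1 c2 W P Qq : R -> R) C E x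
  da1 da2 db db1 db2 dc dc1 dc2 dW dP dQ :
  is_derive a1 x da1 -> is_derive a2 x da2 -> is_derive b x db -> is_derive b1 x db1 ->
  is_derive b2 x db2 -> is_derive c x dc -> is_derive c1 x dc1 -> is_derive c2 x dc2 ->
  is_derive W x dW -> is_derive P x dP -> is_derive Qq x dQ ->
  is_derive (fun y => a1 y + a2 y * W y - ((b1 y + b2 y * W y) * P y + b y * C)
                      - ((c1 y + c2 y * W y) * Qq y + c y * E)) x
    (da1 + (da2 * W x + a2 x * dW)
     - ((db1 + (db2 * W x + b2 x * dW)) * P x + (b1 x + b2 x * W x) * dP + db * C)
     - ((dc1 + (dc2 * W x + c2 x * dW)) * Qq x + (c1 x + c2 x * W x) * dQ + dc * E)).
Proof.
  intros H1 H2 H3 H4 H5 H6 H7 H8 H9 H10 H11. auto_derive.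
  repeat split; eexists; eassumption.
  change (fun x => a1 x) with a1. change (fun x => a2 x) with a2. change (fun x => b x) with b.
  change (fun x => b1 x) with b1. change (fun x => b2 x) with b2. change (fun x => c x) with c.
  change (fun x => c1 x) with c1. change (fun x => c2 x) with c2. change (fun x => W x) with W.
  change (fun x => P x) with P. change (fun x => Qq x) with Qq.
  rewrite (is_derive_unique _ _ _ H1), (is_derive_unique _ _ _ H2), (is_derive_unique _ _ _ H3),
    (is_derive_unique _ _ _ H4), (is_derive_unique _ _ _ H5), (is_derive_unique _ _ _ H6),
    (is_derive_unique _ _ _ H7), (is_derive_unique _ _ _ H8), (is_derive_unique _ _ _ H9),
    (is_derive_unique _ _ _ H10), (is_derive_unique _ _ _ H11). ring.
Qed.

Lemma key (f : R -> R) (k1 k2 : R) (xi tau eta : R -> R -> R -> R) :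
  smooth1 f -> lie_point_symmetry (fisherJ f (gexp k1 k2)) xi tau eta ->
  forall x0 t0 u0 A C E, 0 < x0 ->
  EXPR f k1 k2 xi tau eta x0 t0 u0 A (Bof f k1 k2 x0 u0 A C) C E = 0.
Proof.
  intros Hf [Sxi [Stau [Seta Hs]]] x0 t0 u0 A C E Hx0.
  set (B := Bof f k1 k2 x0 u0 A C).
  pose proof (Hs (uq x0 t0 u0 A B C E) (smooth2_uq _ _ _ _ _ _ _) x0 t0 Hx0) as H.
  rewrite FJ_eq in H.
  unfold evalJ, pr2_apply in H. cbv zeta in H.
  rewrite ?dX_uq, ?dT_uq, ?dX_lin, ?dT_lin, ?uq_at, ?lin_at in H.
  assert (Hfd : ex_derive f u0).
  { destruct (Hf 0%nat u0) as [l Hl]. exists l. exact Hl. }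
  rewrite FJ_dx, FJ_dt, FJ_du, FJ_dux, FJ_dut, FJ_duxx, FJ_duxt, FJ_dutt in H by auto.
  specialize (H ltac:(unfold FJe, B, Bof; ring)).
  set (Q := fun x t : R =>
        eta x t (uq x0 t0 u0 A B C E x t) -
        xi x t (uq x0 t0 u0 A B C E x t) * lin A C E x0 t0 x t -
        tau x t (uq x0 t0 u0 A B C E x t) * lin B E 0 x0 t0 x t) in H.
  assert (HwT : is_derive (fun s => uq x0 t0 u0 A B C E x0 s) t0 B).
  { unfold uq. auto_derive; auto. ring. }
  pose proof (chain_t eta [] x0 t0 _ _ Seta Hx0 HwT) as ce.
  pose proof (chain_t xi [] x0 t0 _ _ Sxi Hx0 HwT) as cx.
  pose proof (chain_t tau [] x0 t0 _ _ Stau Hx0 HwT) as ct.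
  simpl in ce, cx, ct. rewrite uq_at in ce, cx, ct.
  assert (HQt : dT Q x0 t0 = DDt eta x0 t0 u0 B - (DDt xi x0 t0 u0 B * A + xi x0 t0 u0 * E)
       - (DDt tau x0 t0 u0 B * B + tau x0 t0 u0 * 0)).
  { unfold dT. apply is_derive_unique. unfold Q.
    evar (V : R). replace (DDt eta x0 t0 u0 B - (DDt xi x0 t0 u0 B * A + xi x0 t0 u0 * E)
       - (DDt tau x0 t0 u0 B * B + tau x0 t0 u0 * 0)) with V.
    apply isd_Q. exact ce. exact cx. exact ct.
    unfold lin; auto_derive; auto. unfold lin; auto_derive; auto.
    unfold V. rewrite !uq_at, !lin_at. unfold DDt. ring. }
  set (w := fun y => uq x0 t0 u0 A B C E y t0).
  set (W := fun y => lin A C E x0 t0 y t0).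
  set (P2 := fun y => lin B E 0 x0 t0 y t0).
  assert (HwX : forall y, is_derive w y (W y)).
  { intro y. unfold w, W, uq, lin. auto_derive; auto. field. }
  assert (HW : forall y, is_derive W y C).
  { intro y. unfold W, lin. auto_derive; auto. ring. }
  assert (HP2 : forall y, is_derive P2 y E).
  { intro y. unfold P2, lin. auto_derive; auto. ring. }
  set (VX := fun y => p3x eta y t0 (w y) + p3u eta y t0 (w y) * W y
     - ((p3x xi y t0 (w y) + p3u xi y t0 (w y) * W y) * W y + xi y t0 (w y) * C)
     - ((p3x tau y t0 (w y) + p3u tau y t0 (w y) * W y) * P2 y + tau y t0 (w y) * E)).
  assert (HQx : forall y, 0 < y -> is_derive (fun z => Q z t0) y (VX y)).
  { intros y Hy.
    pose proof (chain_x eta [] t0 y _ _ Seta Hy (HwX y)) as ce'.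
    pose proof (chain_x xi [] t0 y _ _ Sxi Hy (HwX y)) as cx'.
    pose proof (chain_x tau [] t0 y _ _ Stau Hy (HwX y)) as ct'.
    simpl in ce', cx', ct'.
    unfold Q. evar (V : R). replace (VX y) with V.
    apply isd_Q. exact ce'. exact cx'. exact ct'. apply HW. apply HP2.
    unfold V, VX, W, P2, w. ring. }
  assert (Hx0' : is_derive (fun y => dX Q y t0) x0
    (let da1 := p3x (p3x eta) x0 t0 (w x0) + p3u (p3x eta) x0 t0 (w x0) * W x0 in
     let da2 := p3x (p3u eta) x0 t0 (w x0) + p3u (p3u eta) x0 t0 (w x0) * W x0 in
     let db := p3x xi x0 t0 (w x0) + p3u xi x0 t0 (w x0) * W x0 in
     let db1 := p3x (p3x xi) x0 t0 (w x0) + p3u (p3x xi) x0 t0 (w x0) * W x0 in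
     let db2 := p3x (p3u xi) x0 t0 (w x0) + p3u (p3u xi) x0 t0 (w x0) * W x0 in
     let dc := p3x tau x0 t0 (w x0) + p3u tau x0 t0 (w x0) * W x0 in
     let dc1 := p3x (p3x tau) x0 t0 (w x0) + p3u (p3x tau) x0 t0 (w x0) * W x0 in
     let dc2 := p3x (p3u tau) x0 t0 (w x0) + p3u (p3u tau) x0 t0 (w x0) * W x0 in
     da1 + (da2 * W x0 + p3u eta x0 t0 (w x0) * C)
     - ((db1 + (db2 * W x0 + p3u xi x0 t0 (w x0) * C)) * W x0
        + (p3x xi x0 t0 (w x0) + p3u xi x0 t0 (w x0) * W x0) * C + db * C)
     - ((dc1 + (dc2 * W x0 + p3u tau x0 t0 (w x0) * C)) * P2 x0
        + (p3x tau x0 t0 (w x0) + p3u tau x0 t0 (w x0) * W x0) * E + dc * E))).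
  { apply is_derive_ext_loc with (f := VX).
    { exists (mkposreal x0 Hx0). intros y Hy. apply ballR in Hy. simpl in Hy.
      symmetry. apply is_derive_unique. apply HQx. apply Rabs_lt_between' in Hy. lra. }
    pose proof (chain_x eta [D3x] t0 x0 _ _ Seta Hx0 (HwX x0)) as a1.
    pose proof (chain_x eta [D3u] t0 x0 _ _ Seta Hx0 (HwX x0)) as a2.
    pose proof (chain_x xi [] t0 x0 _ _ Sxi Hx0 (HwX x0)) as b0.
    pose proof (chain_x xi [D3x] t0 x0 _ _ Sxi Hx0 (HwX x0)) as b1.
    pose proof (chain_x xi [D3u] t0 x0 _ _ Sxi Hx0 (HwX x0)) as b2.
    pose proof (chain_x tau [] t0 x0 _ _ Stau Hx0 (HwX x0)) as c0.
    pose proof (chain_x tau [D3x] t0 x0 _ _ Stau Hx0 (HwX x0)) as c1.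
    pose proof (chain_x tau [D3u] t0 x0 _ _ Stau Hx0 (HwX x0)) as c2.
    simpl in a1, a2, b0, b1, b2, c0, c1, c2.
    unfold VX. apply (isd_VX (fun y => p3x eta y t0 (w y)) (fun y => p3u eta y t0 (w y))
      (fun y => xi y t0 (w y)) (fun y => p3x xi y t0 (w y)) (fun y => p3u xi y t0 (w y))
      (fun y => tau y t0 (w y)) (fun y => p3x tau y t0 (w y)) (fun y => p3u tau y t0 (w y))
      W W P2 C E x0); auto. }
  assert (E1 : dX Q x0 t0 = VX x0) by (apply is_derive_unique; apply HQx; auto).
  assert (E3 : forall v, is_derive (fun y => dX Q y t0) x0 v -> dX (dX Q) x0 t0 = v)
    by (intros v Hv; apply is_derive_unique; exact Hv).
  rewrite E1, (E3 _ Hx0'), HQt in H. clear E1 E3 HQt.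
  unfold VX, W, P2, w in H. rewrite ?uq_at, ?lin_at in H. cbv zeta in H.
  rewrite <- H. unfold EXPR, DDx, DDt, DDxx. field. lra.
Qed.


Lemma const_R (h : R -> R) : (forall s, is_derive h s 0) -> forall a b, h a = h b.
Proof.
  intros H a b. destruct (MVT_cor4 h (fun _ => 0) a (Rabs (b - a)) (fun c _ => H c) b (Rle_refl _))
    as [c [Hc _]]. lra.
Qed.

Lemma const_pos (h : R -> R) : (forall s, 0 < s -> is_derive h s 0) ->
  forall a b, 0 < a -> 0 < b -> h a = h b.
Proof.
  intros H a b Ha Hb.
  destruct (MVT_gen h a b (fun _ => 0)) as [c [_ Hc]].
  - intros x Hx. apply H. destruct Hx as [Hx _].
    assert (Rmin a b > 0) by (apply Rmin_glb_lt; auto). lra.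
  - intros x Hx. assert (0 < x).
    { destruct Hx as [Hx _]. assert (Rmin a b > 0) by (apply Rmin_glb_lt; auto). lra. }
    apply continuity_pt_filterlim. apply (ex_derive_continuous (V:=R_NormedModule)).
    eexists. apply H. auto.
  - lra.
Qed.

Lemma s3_dx F ds x t u : smooth3_xpos F -> 0 < x ->
  is_derive (fun y => iterD3 ds F y t u) x (iterD3 (D3x :: ds) F x t u).
Proof. intros H Hx. destruct (H ds x t u Hx) as [H1 _]. simpl. unfold p3x. apply Derive_correct. auto. Qed.
Lemma s3_dt F ds x t u : smooth3_xpos F -> 0 < x ->
  is_derive (fun s => iterD3 ds F x s u) t (iterD3 (D3t :: ds) F x t u).
Proof. intros H Hx. destruct (H ds x t u Hx) as [_ [H1 _]]. simpl. unfold p3t. apply Derive_correct. auto. Qed.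
Lemma s3_du F ds x t u : smooth3_xpos F -> 0 < x ->
  is_derive (fun v => iterD3 ds F x t v) u (iterD3 (D3u :: ds) F x t u).
Proof. intros H Hx. destruct (H ds x t u Hx) as [_ [_ [H1 _]]]. simpl. unfold p3u. apply Derive_correct. auto. Qed.

Lemma p3x_loc F G x t u : 0 < x -> (forall y, 0 < y -> F y t u = G y t u) -> p3x F x t u = p3x G x t u.
Proof.
  intros Hx H. unfold p3x. apply Derive_ext_loc.
  exists (mkposreal x Hx). intros y Hy. apply ballR in Hy. simpl in Hy.
  apply H. apply Rabs_lt_between' in Hy. lra.
Qed.
Lemma p3t_ext F G x t u : (forall s, F x s u = G x s u) -> p3t F x t u = p3t G x t u.
Proof. intros H. unfold p3t. apply Derive_ext. auto. Qed.
Lemma p3u_ext F G x t u : (forall v, F x t v = G x t v) -> p3u F x t u = p3u G x t u.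
Proof. intros H. unfold p3u. apply Derive_ext. auto. Qed.

Lemma p3x_zero F x t u : 0 < x -> (forall y, 0 < y -> F y t u = 0) -> p3x F x t u = 0.
Proof. intros Hx H. rewrite (p3x_loc F (fun _ _ _ => 0)); auto. unfold p3x, p3t, p3u. apply Derive_const. Qed.
Lemma p3t_zero F x t u : (forall s, F x s u = 0) -> p3t F x t u = 0.
Proof. intros H. rewrite (p3t_ext F (fun _ _ _ => 0)); auto. unfold p3x, p3t, p3u. apply Derive_const. Qed.
Lemma p3u_zero F x t u : (forall v, F x t v = 0) -> p3u F x t u = 0.
Proof. intros H. rewrite (p3u_ext F (fun _ _ _ => 0)); auto. unfold p3x, p3t, p3u. apply Derive_const. Qed.

Lemma isd_eq (f : R -> R) (x l l' : R) : is_derive f x l -> l = l' -> is_derive f x l'.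
Proof. intros H ->. auto. Qed.

Lemma ode_lin (f : R -> R) a b : (forall u, is_derive f u (a + b * f u)) -> b <> 0 ->
  forall u, f u = (f 0 + a / b) * exp (b * u) - a / b.
Proof.
  intros H Hb u.
  assert (Hc : forall s, is_derive (fun v => (f v + a / b) * exp (- b * v)) s 0).
  { intro s. eapply isd_eq. { auto_derive. eexists; apply H. reflexivity. }
    change (fun x => f x) with f. rewrite (is_derive_unique _ _ _ (H s)).
    field. auto. }
  pose proof (const_R _ Hc u 0). simpl in H0.
  replace (- b * 0) with 0 in H0 by ring. rewrite exp_0 in H0.
  assert (exp (- b * u) * exp (b * u) = 1).
  { rewrite <- exp_plus. replace (- b * u + b * u) with 0 by ring. apply exp_0. }
  replace (f u) with ((f u + a / b) * exp (- b * u) * exp (b * u) - a / b).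
  rewrite H0. ring. rewrite Rmult_assoc, H1. ring.
Qed.

Lemma ode_const (f : R -> R) a : (forall u, is_derive f u a) -> forall u, f u = a * u + f 0.
Proof.
  intros H u.
  assert (Hc : forall s, is_derive (fun v => f v - a * v) s 0).
  { intro s. eapply isd_eq. { auto_derive. eexists; apply H. reflexivity. }
    change (fun x => f x) with f. rewrite (is_derive_unique _ _ _ (H s)). ring. }
  pose proof (const_R _ Hc u 0). simpl in H0. lra.
Qed.

Lemma ode_exp (f : R -> R) c k : (forall u, is_derive f u (c * exp (k * u))) -> k <> 0 ->
  forall u, f u = c / k * exp (k * u) + (f 0 - c / k).
Proof.
  intros H Hk u.
  assert (Hc : forall s, is_derive (fun v => f v - c / k * exp (k * v)) s 0).
  { intro s. eapply isd_eq. { auto_derive. eexists; apply H. reflexivity. }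
    change (fun x => f x) with f. rewrite (is_derive_unique _ _ _ (H s)). field. auto. }
  pose proof (const_R _ Hc u 0). simpl in H0.
  replace (k * 0) with 0 in H0 by ring. rewrite exp_0 in H0. lra.
Qed.


Lemma half_eq (a b c : R) : b = 0 -> c = 0 -> 2 * a = b - c -> a = 0.
Proof. intros. lra. Qed.
Lemma same_eq (a b : R) : b = 0 -> a = b -> a = 0.
Proof. intros. lra. Qed.

Definition Fam (f : R -> R) (k2 : R) : Prop :=
  (exists k3 k4, k3 <> 0 /\ k4 <> 0 /\ forall v, f v = k3 * exp (k4 * v))
  \/ (exists k3 k5, k3 <> 0 /\ k5 <> 0 /\ forall v, f v = k3 * exp (k2 * v) + k5)
  \/ (exists k5, k5 <> 0 /\ forall v, f v = k5).

Lemma fam_of (f : R -> R) k2 K3 k D : (forall v, f v = K3 * exp (k * v) + D) ->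
  (exists v, f v <> 0) -> k <> 0 -> (K3 = 0 \/ D = 0 \/ k = k2) -> Fam f k2.
Proof.
  intros H [v Hv] Hk Hc.
  destruct (Req_dec K3 0) as [h3|h3].
  - right. right. exists D. split.
    + intro hD. apply Hv. rewrite H, h3, hD. ring.
    + intro w. rewrite H, h3. ring.
  - destruct (Req_dec D 0) as [hD|hD].
    + left. exists K3, k. repeat split; auto. intro w. rewrite H, hD. ring.
    + destruct Hc as [Hc|[Hc|Hc]]; try contradiction.
      right. left. exists K3, D. repeat split; auto. intro w. rewrite H, Hc. ring.
Qed.

Section Fwd.
Variables (f : R -> R) (k1 k2 : R) (xi tau eta : R -> R -> R -> R).
Hypotheses (Hf : smooth1 f) (Hk1 : k1 <> 0) (Hk2 : k2 <> 0)
  (Hs : lie_point_symmetry (fisherJ f (gexp k1 k2)) xi tau eta).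

Let Sxi : smooth3_xpos xi. Proof. apply Hs. Qed.
Let Stau : smooth3_xpos tau. Proof. apply Hs. Qed.
Let Seta : smooth3_xpos eta. Proof. apply Hs. Qed.
Let Kq := key f k1 k2 xi tau eta Hf Hs.

Let gpos u : k1 * exp (k2 * u) <> 0.
Proof. apply Rmult_integral_contrapositive. split; auto. apply Rgt_not_eq, exp_pos. Qed.

Lemma tau_xu x t u : 0 < x -> p3x tau x t u = 0 /\ p3u tau x t u = 0.
Proof.
  intros Hx.
  assert (H : forall A, p3x tau x t u + p3u tau x t u * A = 0).
  { intro A. pose proof (Kq x t u A 0 1 Hx) as K1. pose proof (Kq x t u A 0 0 Hx) as K0.
    assert (Hd : EXPR f k1 k2 xi tau eta x t u A (Bof f k1 k2 x u A 0) 0 1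
               - EXPR f k1 k2 xi tau eta x t u A (Bof f k1 k2 x u A 0) 0 0
               = 2 * (k1 * exp (k2 * u)) * (p3x tau x t u + p3u tau x t u * A)).
    { unfold EXPR, DDx, DDt, DDxx. field. lra. }
    rewrite K1, K0 in Hd.
    assert (2 * (k1 * exp (k2 * u)) <> 0) by (apply Rmult_integral_contrapositive; split; auto; lra).
    apply (Rmult_eq_reg_l (2 * (k1 * exp (k2 * u)))); auto. lra. }
  pose proof (H 0). pose proof (H 1). split; lra.
Qed.

Lemma tau_zeros x t u : 0 < x ->
  p3x tau x t u = 0 /\ p3u tau x t u = 0 /\ p3x (p3x tau) x t u = 0 /\
  p3u (p3x tau) x t u = 0 /\ p3x (p3u tau) x t u = 0 /\ p3u (p3u tau) x t u = 0.
Proof.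
  intros Hx. repeat split; try apply (tau_xu x t u Hx).
  - apply p3x_zero; auto. intros y Hy. apply (tau_xu y t u Hy).
  - apply p3u_zero. intros v. apply (tau_xu x t v Hx).
  - apply p3x_zero; auto. intros y Hy. apply (tau_xu y t u Hy).
  - apply p3u_zero. intros v. apply (tau_xu x t v Hx).
Qed.

Lemma xi_eta x t u : 0 < x ->
  p3u xi x t u = 0 /\ k2 * eta x t u = 2 * p3x xi x t u - p3t tau x t u.
Proof.
  intros Hx.
  destruct (tau_zeros x t u Hx) as (z1&z2&z3&z4&z5&z6).
  assert (H : forall A, 2 * (k1 * exp (k2 * u)) * p3u xi x t u * A
     + (k1 * exp (k2 * u)) * (2 * p3x xi x t u - p3t tau x t u - k2 * eta x t u) = 0).
  { intro A. pose proof (Kq x t u A 1 0 Hx) as K1. pose proof (Kq x t u A 0 0 Hx) as K0.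
    assert (Hd : EXPR f k1 k2 xi tau eta x t u A (Bof f k1 k2 x u A 1) 1 0
               - EXPR f k1 k2 xi tau eta x t u A (Bof f k1 k2 x u A 0) 0 0
               = 2 * (k1 * exp (k2 * u)) * p3u xi x t u * A
     + (k1 * exp (k2 * u)) * (2 * p3x xi x t u - p3t tau x t u - k2 * eta x t u)).
    { unfold EXPR, DDx, DDt, DDxx, Bof. rewrite z1, z2, z3, z4, z5, z6. field. lra. }
    lra. }
  pose proof (H 0) as H0. pose proof (H 1) as H1.
  assert (E1 : (k1 * exp (k2 * u)) * (2 * p3x xi x t u - p3t tau x t u - k2 * eta x t u) = 0) by lra.
  assert (E2 : 2 * (k1 * exp (k2 * u)) * p3u xi x t u = 0) by lra.
  split.
  - apply Rmult_integral in E2. destruct E2 as [E2|E2]; auto.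
    exfalso. apply Rmult_integral in E2. destruct E2 as [E2|E2]; [lra|]. apply (gpos u); auto.
  - apply Rmult_integral in E1. destruct E1 as [E1|E1]; [exfalso; apply (gpos u); auto|]. lra.
Qed.
Lemma tau_glob x t u : 0 < x -> tau x t u = tau 1 t 0.
Proof.
  intros Hx.
  transitivity (tau x t 0).
  - apply (const_R (fun v => tau x t v)). intro s.
    pose proof (s3_du tau [] x t s Stau Hx) as H. simpl in H.
    rewrite (proj1 (proj2 (tau_zeros x t s Hx))) in H. exact H.
  - apply (const_pos (fun y => tau y t 0)); try lra. intros s Hs'.
    pose proof (s3_dx tau [] s t 0 Stau Hs') as H. simpl in H.
    rewrite (proj1 (tau_zeros s t 0 Hs')) in H. exact H.
Qed.

Lemma xi_glob_u x t u : 0 < x -> xi x t u = xi x t 0.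
Proof.
  intros Hx. apply (const_R (fun v => xi x t v)). intro s.
  pose proof (s3_du xi [] x t s Sxi Hx) as H. simpl in H.
  rewrite (proj1 (xi_eta x t s Hx)) in H. exact H.
Qed.

Lemma tauT x t u : 0 < x -> p3t tau x t u = p3t tau 1 t 0.
Proof.
  intros Hx. unfold p3t. apply Derive_ext. intro s. apply tau_glob; auto.
Qed.

Lemma xix_u x t u : 0 < x -> p3x xi x t u = p3x xi x t 0.
Proof.
  intros Hx. apply (p3x_loc xi (fun a b c => xi a b 0)); auto. intros y Hy. apply xi_glob_u; auto.
Qed.

Lemma eta_u x t u : 0 < x -> eta x t u = eta x t 0.
Proof.
  intros Hx. apply (Rmult_eq_reg_l k2); auto.
  rewrite (proj2 (xi_eta x t u Hx)), (proj2 (xi_eta x t 0 Hx)).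
  rewrite (xix_u x t u Hx), (tauT x t u Hx), (tauT x t 0 Hx). ring.
Qed.

Lemma etax_u x t u : 0 < x -> p3x eta x t u = p3x eta x t 0.
Proof. intros Hx. apply (p3x_loc eta (fun a b c => eta a b 0)); auto. intros y Hy. apply eta_u; auto. Qed.

Lemma xixx_u x t u : 0 < x -> p3x (p3x xi) x t u = p3x (p3x xi) x t 0.
Proof. intros Hx. apply (p3x_loc (p3x xi) (fun a b c => p3x xi a b 0)); auto. intros y Hy. apply xix_u; auto. Qed.

Lemma xit_u x t u : 0 < x -> p3t xi x t u = p3t xi x t 0.
Proof. intros Hx. apply (p3t_ext xi (fun a b c => xi a b 0)). intros s. apply xi_glob_u; auto. Qed.

Lemma const_u_zero F x t u : (forall v, F x t v = F x t 0) -> p3u F x t u = 0.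
Proof.
  intros H. rewrite (p3u_ext F (fun x t _ => F x t 0)); auto. unfold p3u. apply Derive_const.
Qed.

Lemma eta_zeros x t u : 0 < x ->
  p3u eta x t u = 0 /\ p3u (p3x eta) x t u = 0 /\ p3x (p3u eta) x t u = 0 /\ p3u (p3u eta) x t u = 0.
Proof.
  intros Hx.
  assert (Z : forall y v, 0 < y -> p3u eta y t v = 0).
  { intros y v Hy. apply const_u_zero. intros; apply eta_u; auto. }
  repeat split; auto.
  - apply const_u_zero. intros; apply etax_u; auto.
  - apply p3x_zero; auto.
  - apply p3u_zero. auto.
Qed.

Lemma xi_zeros x t u : 0 < x ->
  p3u xi x t u = 0 /\ p3u (p3x xi) x t u = 0 /\ p3x (p3u xi) x t u = 0 /\ p3u (p3u xi) x t u = 0.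
Proof.
  intros Hx.
  assert (Z : forall y v, 0 < y -> p3u xi y t v = 0).
  { intros y v Hy. apply const_u_zero. intros; apply xi_glob_u; auto. }
  repeat split; auto.
  - apply const_u_zero. intros; apply xix_u; auto.
  - apply p3x_zero; auto.
  - apply p3u_zero. auto.
Qed.

Definition Pc x t u := xi x t u / (x * x) - k2 * eta x t u / x - 2 * k2 * p3x eta x t u
  + p3x xi x t u / x - p3t tau x t u / x + p3x (p3x xi) x t u.

Lemma coefs x t u : 0 < x ->
  k1 * exp (k2 * u) * Pc x t u - p3t xi x t u = 0 /\
  - eta x t u * Derive f u - p3x eta x t u * (k1 * exp (k2 * u)) / x + p3t eta x t u
  - p3t tau x t u * f u - k1 * exp (k2 * u) * p3x (p3x eta) x t u = 0.
Proof.
  intros Hx.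
  destruct (tau_zeros x t u Hx) as (z1&z2&z3&z4&z5&z6).
  destruct (eta_zeros x t u Hx) as (e1&e2&e3&e4).
  destruct (xi_zeros x t u Hx) as (x1&x2&x3&x4).
  pose proof (Kq x t u 1 0 0 Hx) as K1. pose proof (Kq x t u (-1) 0 0 Hx) as K2.
  pose proof (Kq x t u 0 0 0 Hx) as K0.
  unfold EXPR, DDx, DDt, DDxx, Bof in K1, K2, K0.
  rewrite z1, z2, z3, z4, z5, z6, e1, e2, e3, e4, x1, x2, x3, x4 in K1, K2, K0.
  split.
  - apply (half_eq _ _ _ K1 K2). unfold Pc. field. lra.
  - apply (same_eq _ _ K0). field. lra.
Qed.
Lemma P_xit x t u : 0 < x -> Pc x t u = 0 /\ p3t xi x t u = 0.
Proof.
  intros Hx.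
  assert (HP : forall v, Pc x t v = Pc x t 0).
  { intro v. unfold Pc. rewrite (xi_glob_u x t v Hx), (eta_u x t v Hx), (etax_u x t v Hx),
      (xix_u x t v Hx), (tauT x t v Hx), (tauT x t 0 Hx), (xixx_u x t v Hx). reflexivity. }
  assert (HT : forall v, p3t xi x t v = p3t xi x t 0) by (intro; apply xit_u; auto).
  pose proof (proj1 (coefs x t 0 Hx)) as C0.
  pose proof (proj1 (coefs x t (/ k2) Hx)) as C1.
  rewrite HP, HT in C1.
  replace (k2 * 0) with 0 in C0 by ring. rewrite exp_0 in C0.
  replace (k2 * / k2) with 1 in C1 by (field; auto).
  assert (He : 1 + 1 < exp 1) by (apply exp_ineq1; lra).
  assert (HP0 : Pc x t 0 = 0).
  { assert (k1 * (exp 1 - 1) * Pc x t 0 = 0) by lra.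
    apply Rmult_integral in H. destruct H as [H|H]; auto.
    apply Rmult_integral in H. destruct H as [H|H]; [contradiction|lra]. }
  rewrite HP, HT. split; auto. rewrite HP0 in C0. lra.
Qed.

Lemma xi_glob x t u : 0 < x -> xi x t u = xi x 0 0.
Proof.
  intros Hx. rewrite (xi_glob_u x t u Hx).
  apply (const_R (fun s => xi x s 0)). intro s.
  pose proof (s3_dt xi [] x s 0 Sxi Hx) as H. simpl in H.
  rewrite (proj2 (P_xit x s 0 Hx)) in H. exact H.
Qed.

Lemma etaxx_u x t u : 0 < x -> p3x (p3x eta) x t u = p3x (p3x eta) x t 0.
Proof. intros Hx. apply (p3x_loc (p3x eta) (fun a b c => p3x eta a b 0)); auto. intros y Hy. apply etax_u; auto. Qed.

Lemma xix_glob x t u : 0 < x -> p3x xi x t u = p3x xi x 0 0.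
Proof. intros Hx. apply (p3x_loc xi (fun a b c => xi a 0 0)); auto. intros y Hy. apply xi_glob; auto. Qed.

Lemma eta_rel x t u : 0 < x -> k2 * eta x t u = 2 * p3x xi x 0 0 - p3t tau 1 t 0.
Proof. intros Hx. rewrite (proj2 (xi_eta x t u Hx)), (xix_glob x t u Hx), (tauT x t u Hx). ring. Qed.
Lemma A0 x t u : 0 < x ->
  - eta x t 0 * Derive f u - k1 * exp (k2 * u) * (p3x eta x t 0 / x + p3x (p3x eta) x t 0)
  + p3t eta x t u - p3t tau 1 t 0 * f u = 0.
Proof.
  intros Hx. pose proof (proj2 (coefs x t u Hx)) as H.
  rewrite (eta_u x t u Hx), (etax_u x t u Hx), (etaxx_u x t u Hx), (tauT x t u Hx) in H.
  apply (same_eq _ _ H). field. lra.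
Qed.

Lemma fex u : ex_derive f u.
Proof. destruct (Hf 0%nat u) as [l Hl]. exists l. exact Hl. Qed.

Lemma etat_eq x1 x2 t u : 0 < x1 -> 0 < x2 -> p3t eta x1 t u = p3t eta x2 t u.
Proof.
  intros H1 H2.
  set (K := 2 * (p3x xi x1 0 0 - p3x xi x2 0 0) / k2).
  unfold p3t. rewrite (Derive_ext (fun s => eta x1 s u) (fun s => eta x2 s u + K)).
  - rewrite Derive_plus. rewrite Derive_const. ring.
    eexists. apply (s3_dt eta [] x2 t u Seta H2).
    apply ex_derive_const.
  - intro s. apply (Rmult_eq_reg_l k2); auto.
    unfold K. rewrite Rmult_plus_distr_l, (eta_rel x1 s u H1), (eta_rel x2 s u H2). field. auto.
Qed.
Lemma branch1 : (exists v, f v <> 0) ->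
  (exists x1 x2 t, 0 < x1 /\ 0 < x2 /\ eta x1 t 0 <> eta x2 t 0) -> Fam f k2.
Proof.
  intros Hne [x1 [x2 [t [H1 [H2 Hn]]]]].
  set (p1 := p3x eta x1 t 0 / x1 + p3x (p3x eta) x1 t 0).
  set (p2 := p3x eta x2 t 0 / x2 + p3x (p3x eta) x2 t 0).
  set (c := - (p1 - p2) * k1 / (eta x1 t 0 - eta x2 t 0)).
  assert (Hn' : eta x1 t 0 - eta x2 t 0 <> 0) by lra.
  assert (Hd : forall u, is_derive f u (c * exp (k2 * u))).
  { intro u. replace (c * exp (k2 * u)) with (Derive f u). apply Derive_correct, fex.
    pose proof (A0 x1 t u H1) as E1. pose proof (A0 x2 t u H2) as E2.
    rewrite (etat_eq x1 x2 t u H1 H2) in E1. fold p1 in E1. fold p2 in E2.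
    apply (Rmult_eq_reg_l (eta x1 t 0 - eta x2 t 0)); auto.
    unfold c. field_simplify; auto. lra. }
  pose proof (ode_exp f c k2 Hd Hk2) as Hf'.
  apply (fam_of f k2 (c / k2) k2 (f 0 - c / k2)); auto.
Qed.
Lemma branch2 : (exists v, f v <> 0) -> ~ const_multiple_dt xi tau eta ->
  (forall x1 x2 t, 0 < x1 -> 0 < x2 -> eta x1 t 0 = eta x2 t 0) -> Fam f k2.
Proof.
  intros [v Hv] Hnc Hb.
  set (N := fun t => eta 1 t 0).
  set (T' := fun t => p3t tau 1 t 0).
  set (N' := fun t => p3t eta 1 t 0).
  assert (HN : forall x t u, 0 < x -> eta x t u = N t).
  { intros x t u Hx. rewrite (eta_u x t u Hx). apply Hb; lra. }
  assert (Hex : forall x t u, 0 < x -> p3x eta x t u = 0).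
  { intros x t u Hx. rewrite (p3x_loc eta (fun a b c => N b)); auto.
    unfold p3x. apply Derive_const. }
  assert (Hexx : forall x t u, 0 < x -> p3x (p3x eta) x t u = 0).
  { intros x t u Hx. apply p3x_zero; auto. }
  assert (HNd : forall t, is_derive N t (N' t)).
  { intro t. apply (s3_dt eta [] 1 t 0 Seta Rlt_0_1). }
  set (a := fun t => (k2 * N t + T' t) / 2).
  assert (Hxx : forall x t u, 0 < x -> p3x xi x t u = a t).
  { intros x t u Hx. pose proof (proj2 (xi_eta x t u Hx)) as H.
    rewrite (HN x t u Hx), (tauT x t u Hx) in H. unfold a, T'. lra. }
  assert (Hxxx : forall x t u, 0 < x -> p3x (p3x xi) x t u = 0).
  { intros x t u Hx. rewrite (p3x_loc (p3x xi) (fun a' b c => a b)); auto.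
    unfold p3x. apply Derive_const. }
  assert (Hxi : forall x t u, 0 < x -> xi x t u = a t * x).
  { intros x t u Hx. pose proof (proj1 (P_xit x t u Hx)) as H. unfold Pc in H.
    rewrite (HN x t u Hx), (Hex x t u Hx), (Hxx x t u Hx), (tauT x t u Hx), (Hxxx x t u Hx) in H.
    assert (H' : xi x t u / (x * x) = a t / x) by (unfold a, T' in *; lra).
    replace (xi x t u) with (xi x t u / (x * x) * (x * x)) by (field; lra).
    rewrite H'. field. lra. }
  set (a0 := a 0).
  assert (Ha : forall t, a t = a0).
  { intro t. pose proof (Hxi 1 t 0 Rlt_0_1) as E1. pose proof (Hxi 1 0 0 Rlt_0_1) as E2.
    rewrite (xi_glob 1 t 0 Rlt_0_1) in E1. unfold a0. lra. }
  assert (R1 : forall t, k2 * N t = 2 * a0 - T' t).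
  { intro t. rewrite <- (Ha t). unfold a. field. }
  assert (R2 : forall t u, N' t = N t * Derive f u + T' t * f u).
  { intros t u. pose proof (A0 1 t u Rlt_0_1) as H.
    rewrite (Hex 1 t 0 Rlt_0_1), (Hexx 1 t 0 Rlt_0_1) in H.
    rewrite (p3t_ext eta (fun a b c => eta 1 b 0) 1 t u) in H by (intro; apply HN; lra).
    change (p3t (fun _ b _ => eta 1 b 0) 1 t u) with (p3t eta 1 t 0) in H. unfold N', T', N in *. lra. }
  assert (Nconst : forall K, (forall t, N t = K) -> forall t, N' t = 0).
  { intros K HK t. rewrite <- (is_derive_unique _ _ _ (HNd t)).
    rewrite (Derive_ext N (fun _ => K)); auto. apply Derive_const. }
  assert (Hfd : forall u, is_derive f u (Derive f u)) by (intro; apply Derive_correct, fex).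
  destruct (classic (exists t0, N t0 <> 0)) as [[t0 Ht0]|Hall].
  - set (al := N' t0 / N t0). set (be := - T' t0 / N t0).
    assert (Hdf : forall u, Derive f u = al + be * f u).
    { intro u. pose proof (R2 t0 u). unfold al, be. field_simplify; auto.
      apply (Rmult_eq_reg_l (N t0)); auto. field_simplify; auto. lra. }
    assert (Hdf' : forall u, is_derive f u (al + be * f u)).
    { intro u. rewrite <- Hdf. auto. }
    destruct (Req_dec be 0) as [hb|hb].
    + assert (Hc : forall u, is_derive f u al).
      { intro u. replace al with (al + be * f u) by (rewrite hb; ring). auto. }
      pose proof (ode_const f al Hc) as Hfl.
      destruct (Req_dec al 0) as [ha|ha].
      * apply (fam_of f k2 0 1 (f 0)); [|exists v; auto|lra|auto].
        intro w. rewrite Hfl, ha. ring.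
      * exfalso.
        assert (HT : forall t, T' t = 0).
        { intro t. pose proof (R2 t 0) as E0. pose proof (R2 t 1) as E1.
          rewrite (Hdf 0), (Hdf 1), hb, (Hfl 0), (Hfl 1) in *.
          assert (T' t * al = 0) by lra.
          apply Rmult_integral in H. destruct H; [auto|contradiction]. }
        assert (HNc : forall t, N t = 2 * a0 / k2).
        { intro t. apply (Rmult_eq_reg_l k2); auto. rewrite R1, HT. field. auto. }
        pose proof (R2 t0 0) as E0. rewrite (Nconst _ HNc t0), (Hdf 0), hb, HT in E0.
        assert (N t0 * al = 0) by lra.
        apply Rmult_integral in H. destruct H; contradiction.
    + pose proof (ode_lin f al be Hdf' hb) as Hfl.
      destruct (classic (f 0 + al / be = 0 \/ - (al / be) = 0 \/ be = k2)) as [Hc|Hc].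
      * apply (fam_of f k2 (f 0 + al / be) be (- (al / be))).
        -- intro w. rewrite (Hfl w) at 1. ring.
        -- exists v; auto.
        -- auto.
        -- auto.
      * exfalso.
        set (C := f 0 + al / be) in *. set (D := - (al / be)) in *.
        assert (hC : C <> 0) by tauto. assert (hD : D <> 0) by tauto.
        assert (hk : be <> k2) by tauto.
        assert (He : 1 + 1 < exp 1) by (apply exp_ineq1; lra).
        assert (HT : forall t, T' t = - be * N t).
        { intro t. pose proof (R2 t 0) as E0. pose proof (R2 t (/ be)) as E1.
          rewrite (Hdf 0), (Hdf (/ be)), (Hfl 0), (Hfl (/ be)) in *.
          replace (be * 0) with 0 in * by ring. replace (be * / be) with 1 in * by (field; auto).
          rewrite exp_0 in *.
          assert (Hal : al = - be * D) by (unfold D; field; auto).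
          rewrite Hal in E0, E1.
          assert (C * (exp 1 - 1) * (be * N t + T' t) = 0) by lra.
          apply Rmult_integral in H. destruct H as [H|H]; [|lra].
          apply Rmult_integral in H. destruct H; [contradiction|lra]. }
        assert (HNc : forall t, N t = 2 * a0 / (k2 - be)).
        { intro t. apply (Rmult_eq_reg_l (k2 - be)); [|lra].
          pose proof (R1 t). rewrite HT in H. field_simplify; [lra|lra]. }
        pose proof (R2 t0 0) as E0. rewrite (Nconst _ HNc t0), (Hdf 0), (Hfl 0), (HT t0) in E0.
        replace (be * 0) with 0 in E0 by ring. rewrite exp_0 in E0.
        assert (Hal : al = - be * D) by (unfold D; field; auto).
        rewrite Hal in E0.
        assert (be * N t0 * D = 0) by lra.
        apply Rmult_integral in H. destruct H as [H|H]; [|contradiction].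
        apply Rmult_integral in H. destruct H; contradiction.
  - exfalso. apply Hnc.
    assert (HN0 : forall t, N t = 0).
    { intro t. destruct (Req_dec (N t) 0); auto. exfalso; apply Hall; eauto. }
    assert (HT : forall t, T' t = 0).
    { intro t. pose proof (R2 t v) as E. rewrite (Nconst 0 HN0 t), HN0 in E.
      assert (T' t * f v = 0) by lra.
      apply Rmult_integral in H. destruct H; [auto|contradiction]. }
    assert (Ha0 : a0 = 0).
    { rewrite <- (Ha 0). unfold a. rewrite HN0, HT. field. }
    exists (tau 1 0 0). intros x t u Hx. split; [|split].
    + rewrite Hxi, Ha, Ha0; auto. ring.
    + rewrite (tau_glob x t u Hx). apply (const_R (fun s => tau 1 s 0)). intro s.
      pose proof (s3_dt tau [] 1 s 0 Stau Rlt_0_1) as H. simpl in H.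
      fold (T' s) in H. rewrite HT in H. exact H.
    + rewrite HN; auto.
Qed.

Lemma forward : (exists v, f v <> 0) -> ~ const_multiple_dt xi tau eta -> Fam f k2.
Proof.
  intros Hne Hnc.
  destruct (classic (exists x1 x2 t, 0 < x1 /\ 0 < x2 /\ eta x1 t 0 <> eta x2 t 0)) as [H|H].
  - apply branch1; auto.
  - apply branch2; auto. intros x1 x2 t H1 H2. apply NNPP. intro Hn. apply H. eauto 10.
Qed.
End Fwd.








Lemma lps_xi D xi xi' tau eta : (forall x t u, xi' x t u = xi x t u) ->
  lie_point_symmetry D xi tau eta -> lie_point_symmetry D xi' tau eta.
Proof.
  intros H. replace xi' with xi; auto.
  do 3 (apply functional_extensionality; intro). symmetry; auto.
Qed.

Ltac smooth_cls a b c d k :=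
  apply (smooth3_ext _ (cls a b c d k)); [intros; unfold cls; ring | apply smooth3_cls].

Lemma Derive_f_eq (f g : R -> R) u : (forall v, f v = g v) -> Derive f u = Derive g u.
Proof. intros H. apply Derive_ext. auto. Qed.

Lemma sym_X1 f k1 k2 : smooth1 f ->
  lie_point_symmetry (fisherJ f (gexp k1 k2)) (fun x t u => 0) (fun x t u => 1) (fun x t u => 0).
Proof.
  intros Hf. apply (lps_xi _ (fun x t u => 0 * x)); [intros; ring|].
  apply (sym_lin f k1 k2 0 (fun _ => 1) (fun _ => 0) (fun _ => 0) (fun _ => 0)); auto.
  - smooth_cls 0 0 0 0 0.
  - smooth_cls 0 1 0 0 0.
  - smooth_cls 0 0 0 0 0.
  - intros; auto_derive; auto.
  - intros; auto_derive; auto.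
  - intros; ring.
  - intros; ring.
Qed.

Lemma sym_a f k1 k2 k3 k4 : smooth1 f -> (forall v, f v = k3 * exp (k4 * v)) ->
  lie_point_symmetry (fisherJ f (gexp k1 k2))
       (fun x t u => (k4 - k2) * x) (fun x t u => 2 * k4 * t) (fun x t u => -2).
Proof.
  intros Hf Hfe.
  apply (sym_lin f k1 k2 (k4 - k2) (fun t => 2 * k4 * t) (fun _ => -2) (fun _ => 2 * k4) (fun _ => 0)); auto.
  - smooth_cls (k4 - k2) 0 0 0 0.
  - smooth_cls 0 0 (2 * k4) 0 0.
  - smooth_cls 0 (-2) 0 0 0.
  - intros; auto_derive; auto; ring.
  - intros; auto_derive; auto.
  - intros; ring.
  - intros t u. rewrite (Derive_f_eq f (fun v => k3 * exp (k4 * v))) by auto.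
    rewrite Hfe. rewrite (is_derive_unique _ _ (k3 * (k4 * exp (k4 * u)))). ring.
    auto_derive; auto; ring.
Qed.

Lemma sym_b f k1 k2 k3 k5 : smooth1 f -> (forall v, f v = k3 * exp (k2 * v) + k5) ->
  lie_point_symmetry (fisherJ f (gexp k1 k2))
       (fun x t u => 0) (fun x t u => exp (- k2 * k5 * t))
       (fun x t u => k5 * exp (- k2 * k5 * t)).
Proof.
  intros Hf Hfe. apply (lps_xi _ (fun x t u => 0 * x)); [intros; ring|].
  apply (sym_lin f k1 k2 0 (fun t => exp (- k2 * k5 * t)) (fun t => k5 * exp (- k2 * k5 * t))
    (fun t => - k2 * k5 * exp (- k2 * k5 * t)) (fun t => - k2 * k5 * k5 * exp (- k2 * k5 * t))); auto.
  - smooth_cls 0 0 0 0 0.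
  - smooth_cls 0 0 0 1 (- k2 * k5).
  - smooth_cls 0 0 0 k5 (- k2 * k5).
  - intros; auto_derive; auto; ring.
  - intros; auto_derive; auto; ring.
  - intros; ring.
  - intros t u. rewrite (Derive_f_eq f (fun v => k3 * exp (k2 * v) + k5)) by auto.
    rewrite Hfe. rewrite (is_derive_unique _ _ (k3 * (k2 * exp (k2 * u)))). ring.
    auto_derive; auto; ring.
Qed.

Lemma sym_c3 f k1 k2 k5 : smooth1 f -> (forall v, f v = k5) ->
  lie_point_symmetry (fisherJ f (gexp k1 k2))
       (fun x t u => k2 * x) (fun x t u => 0) (fun x t u => 2).
Proof.
  intros Hf Hfe.
  apply (sym_lin f k1 k2 k2 (fun _ => 0) (fun _ => 2) (fun _ => 0) (fun _ => 0)); auto.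
  - smooth_cls k2 0 0 0 0.
  - smooth_cls 0 0 0 0 0.
  - smooth_cls 0 2 0 0 0.
  - intros; auto_derive; auto.
  - intros; auto_derive; auto.
  - intros; ring.
  - intros t u. rewrite (Derive_f_eq f (fun v => k5)) by auto. rewrite Derive_const. ring.
Qed.

Theorem theorem1 (f : R -> R) (k1 k2 : R) :
  smooth1 f -> (exists v, f v <> 0) -> k1 <> 0 -> k2 <> 0 ->
  ( ( exists xi tau eta : R -> R -> R -> R,
        lie_point_symmetry (fisherJ f (gexp k1 k2)) xi tau eta /\
        ~ const_multiple_dt xi tau eta )
    <->
    ( (exists k3 k4, k3 <> 0 /\ k4 <> 0 /\
         forall v, f v = k3 * exp (k4 * v))
      \/ (exists k3 k5, k3 <> 0 /\ k5 <> 0 /\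
         forall v, f v = k3 * exp (k2 * v) + k5)
      \/ (exists k5, k5 <> 0 /\ forall v, f v = k5) ) )
  /\
  (* (a) *)
  (forall k3 k4, k3 <> 0 -> k4 <> 0 -> (forall v, f v = k3 * exp (k4 * v)) ->
     lie_point_symmetry (fisherJ f (gexp k1 k2))
       (fun x t u => 0) (fun x t u => 1) (fun x t u => 0)
     /\ lie_point_symmetry (fisherJ f (gexp k1 k2))
       (fun x t u => (k4 - k2) * x) (fun x t u => 2 * k4 * t)
       (fun x t u => -2))
  /\
  (* (b) *)
  (forall k3 k5, k3 <> 0 -> k5 <> 0 ->
     (forall v, f v = k3 * exp (k2 * v) + k5) ->
     lie_point_symmetry (fisherJ f (gexp k1 k2))
       (fun x t u => 0) (fun x t u => 1) (fun x t u => 0)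
     /\ lie_point_symmetry (fisherJ f (gexp k1 k2))
       (fun x t u => 0) (fun x t u => exp (- k2 * k5 * t))
       (fun x t u => k5 * exp (- k2 * k5 * t)))
  /\
  (* (c) *)
  (forall k5, k5 <> 0 -> (forall v, f v = k5) ->
     lie_point_symmetry (fisherJ f (gexp k1 k2))
       (fun x t u => 0) (fun x t u => 1) (fun x t u => 0)
     /\ lie_point_symmetry (fisherJ f (gexp k1 k2))
       (fun x t u => 0) (fun x t u => exp (- k2 * k5 * t))
       (fun x t u => k5 * exp (- k2 * k5 * t))
     /\ lie_point_symmetry (fisherJ f (gexp k1 k2))
       (fun x t u => k2 * x) (fun x t u => 0) (fun x t u => 2)).
Proof.
  intros Hf Hne Hk1 Hk2.
  assert (Hc0 : forall k5 : R, (forall v, f v = k5) -> forall v, f v = 0 * exp (k2 * v) + k5).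
  { intros k5 H v. rewrite H. ring. }
  split; [split|split; [|split]].
  - intros [xi [tau [eta [Hs Hnc]]]]. exact (forward f k1 k2 xi tau eta Hf Hk1 Hk2 Hs Hne Hnc).
  - intros [[k3 [k4 [h3 [h4 Hfe]]]]|[[k3 [k5 [h3 [h5 Hfe]]]]|[k5 [h5 Hfe]]]].
    + exists (fun x t u => (k4 - k2) * x), (fun x t u => 2 * k4 * t), (fun x t u => -2).
      split. apply (sym_a f k1 k2 k3 k4); auto.
      intros [c Hc]. destruct (Hc 1 0 0 Rlt_0_1) as [_ [H0 _]]. destruct (Hc 1 1 0 Rlt_0_1) as [_ [H1 _]].
      apply h4. lra.
    + exists (fun x t u => 0), (fun x t u => exp (- k2 * k5 * t)), (fun x t u => k5 * exp (- k2 * k5 * t)).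
      split. apply (sym_b f k1 k2 k3 k5); auto.
      intros [c Hc]. destruct (Hc 1 0 0 Rlt_0_1) as [_ [_ H0]].
      apply h5. apply (Rmult_eq_reg_r (exp (- k2 * k5 * 0))). rewrite H0. ring.
      apply Rgt_not_eq, exp_pos.
    + exists (fun x t u => 0), (fun x t u => exp (- k2 * k5 * t)), (fun x t u => k5 * exp (- k2 * k5 * t)).
      split. apply (sym_b f k1 k2 0 k5); auto.
      intros [c Hc]. destruct (Hc 1 0 0 Rlt_0_1) as [_ [_ H0]].
      apply h5. apply (Rmult_eq_reg_r (exp (- k2 * k5 * 0))). rewrite H0. ring.
      apply Rgt_not_eq, exp_pos.
  - intros k3 k4 h3 h4 Hfe. split. apply sym_X1; auto. apply (sym_a f k1 k2 k3 k4); auto.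
  - intros k3 k5 h3 h5 Hfe. split. apply sym_X1; auto. apply (sym_b f k1 k2 k3 k5); auto.
  - intros k5 h5 Hfe. split; [|split].
    + apply sym_X1; auto.
    + apply (sym_b f k1 k2 0 k5); auto.
    + apply (sym_c3 f k1 k2 k5); auto.
Qed.
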